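(* The matrix $$U_7=S_1\otimes S_2\otimes S_0+S_2\otimes S_3\otimes S_0+S_0\otimes S_0\otimes S_1+S_3\otimes S_1\otimes S_1+S_1\otimes S_1\otimes S_2+S_2\otimes S_0\otimes S_2+S_0\otimes S_3\otimes S_3+S_3\otimes S_2\otimes S_3$$ on $\mathbb{C}^2\otimes\mathbb{C}^2\otimes\mathbb{C}^2$ is unitary and $\mathrm{sr}(U_7)=7$.
   Context: $S_0=\begin{bmatrix}1&0\\0&0\end{bmatrix}$, $S_1=\begin{bmatrix}0&1\\0&0\end{bmatrix}$, $S_2=\begin{bmatrix}0&0\\1&0\end{bmatrix}$, $S_3=\begin{bmatrix}0&0\\0&1\end{bmatrix}$. For a matrix $U$ on $\mathbb{C}^2\otimes\mathbb{C}^2\otimes\mathbb{C}^2$ (systems $A,B,C$), its Schmidt rank $\mathrm{sr}(U)$ is the least integer $r$ such that $U=\sum_{j=1}^r A_j\otimes B_j\otimes C_j$ with $A_j,B_j,C_j$ complex $2\times 2$ matrices (i.e. the tensor rank of $U$). *)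

(* Defs.v *)
From HB Require Import structures.
From mathcomp Require Import all_boot all_order all_algebra.
From mathcomp Require Import mxtens.
Set Implicit Arguments. Unset Strict Implicit. Unset Printing Implicit Defensive.
Import Order.TTheory GRing.Theory Num.Theory.
Local Open Scope ring_scope.

(* The complex numbers are modelled by an arbitrary numClosedFieldType C
   (algebraically closed field of char 0 with conjugation); this includes
   algC and complex R for any real closed field R (e.g. the real numbers). *)

Section Defs.
Variable C : numClosedFieldType.

Definition S0 : 'M[C]_2 := delta_mx 0 0.
Definition S1 : 'M[C]_2 := delta_mx 0 1.
Definition S2 : 'M[C]_2 := delta_mx 1 0.
Definition S3 : 'M[C]_2 := delta_mx 1 1.

Definition tens3 (A B Cm : 'M[C]_2) : 'M[C]_(2 * 2 * 2) := (A *t B) *t Cm.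

Definition adjmx n (M : 'M[C]_n) : 'M[C]_n := (map_mx Num.conj M)^T.

Definition unitary_mx n (M : 'M[C]_n) : Prop :=
  M *m adjmx M = 1%:M /\ adjmx M *m M = 1%:M.

Definition sr_le (U : 'M[C]_(2 * 2 * 2)) (r : nat) : Prop :=
  exists (A B Cm : 'I_r -> 'M[C]_2), U = \sum_(j < r) tens3 (A j) (B j) (Cm j).

Definition is_schmidt_rank (U : 'M[C]_(2 * 2 * 2)) (r : nat) : Prop :=
  sr_le U r /\ forall r', sr_le U r' -> (r <= r')%N.

Definition U7 : 'M[C]_(2 * 2 * 2) :=
  tens3 S1 S2 S0 + tens3 S2 S3 S0 + tens3 S0 S0 S1 + tens3 S3 S1 S1
  + tens3 S1 S1 S2 + tens3 S2 S0 S2 + tens3 S0 S3 S3 + tens3 S3 S2 S3.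

End Defs.

(* Main.v *)
Require Import Defs.
From HB Require Import structures.
From mathcomp Require Import all_boot all_order all_algebra ring.
From mathcomp Require Import mxtens.
Set Implicit Arguments. Unset Strict Implicit. Unset Printing Implicit Defensive.
Import Order.TTheory GRing.Theory Num.Theory.
Local Open Scope ring_scope.

Definition mk2 (C : numClosedFieldType) (a b c d : C) : 'M[C]_2 :=
  \matrix_(i < 2, j < 2) (if i == 0 then (if j == 0 then a else b) else (if j == 0 then c else d)).

Lemma ord2P (i : 'I_2) : i = 0 \/ i = 1.
Proof. case: i => [[|[|//]] Hi]; [left|right]; exact: val_inj. Qed.

Lemma lift01 : lift ord0 (ord0 : 'I_1) = 1 :> 'I_2.
Proof. exact: val_inj. Qed.
Lemma ord0_2 : ord0 = 0 :> 'I_2.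
Proof. exact: val_inj. Qed.

Lemma mk2E (C : numClosedFieldType) (a b c d : C) :
  (mk2 a b c d 0 0 = a) * (mk2 a b c d 0 1 = b) * (mk2 a b c d 1 0 = c) * (mk2 a b c d 1 1 = d).
Proof. by rewrite !mxE. Qed.

Lemma mx2_eta (C : numClosedFieldType) (A : 'M[C]_2) : A = mk2 (A 0 0) (A 0 1) (A 1 0) (A 1 1).
Proof. apply/matrixP => i j; rewrite mxE. by case: (ord2P i) (ord2P j) => -> [] ->. Qed.

Lemma mul2 (C : numClosedFieldType) (a b c d a' b' c' d' : C) :
  mk2 a b c d *m mk2 a' b' c' d' = mk2 (a * a' + b * c') (a * b' + b * d') (c * a' + d * c') (c * b' + d * d').
Proof.
apply/matrixP => i j; rewrite !mxE !big_ord_recl big_ord0 lift01 ord0_2 !mxE.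
by case: (ord2P i) (ord2P j) => -> [] -> /=; rewrite addr0.
Qed.
Lemma rank_sum_le (C : numClosedFieldType) n m (P : pred 'I_n) (v : 'I_n -> 'rV[C]_m) :
  (\rank (\sum_(j | P j) <<v j>>)%MS <= #|P|)%N.
Proof.
rewrite -sum1_card.
elim/big_rec2: _ => [|j k V Pj IH]; first by rewrite mxrank0.
apply: leq_trans (mxrank_adds_leqif _ _) _.
rewrite leq_add // mxrank_gen; exact: rank_leq_row.
Qed.

Lemma card3 (j0 j1 j2 : 'I_6) : j0 != j1 -> j0 != j2 -> j1 != j2 ->
  #|[pred j : 'I_6 | (j != j0) && (j != j1) && (j != j2)]| = 3%N.
Proof.
move=> h01 h02 h12.
have := cardC [pred j : 'I_6 | (j != j0) && (j != j1) && (j != j2)].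
rewrite card_ord.
have -> : #|[predC [pred j : 'I_6 | (j != j0) && (j != j1) && (j != j2)]]| = #|[:: j0; j1; j2]|.
  apply: eq_card => j; rewrite !inE /=.
  by case: (j == j0); case: (j == j1); case: (j == j2).
rewrite (card_uniqP _) /=; first by move=> H; apply/eqP; rewrite -(eqn_add2r 3) H.
by rewrite !inE negb_or h01 h02 h12.
Qed.

Definition inspan (C : numClosedFieldType) (a : 'I_6 -> 'M[C]_2) (j0 j1 j2 : 'I_6) (M : 'M[C]_2) :=
  exists w : 'I_6 -> C, [/\ w j0 = 0, w j1 = 0, w j2 = 0 & M = \sum_j w j *: a j].

Lemma inspanD (C : numClosedFieldType) a j0 j1 j2 (M N : 'M[C]_2) :
  inspan a j0 j1 j2 M -> inspan a j0 j1 j2 N -> inspan a j0 j1 j2 (M + N).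
Proof.
move=> [w [h0 h1 h2 ->]] [w' [h0' h1' h2' ->]].
exists (fun j => w j + w' j); split; rewrite ?h0 ?h1 ?h2 ?h0' ?h1' ?h2' ?addr0 //.
by rewrite -big_split /=; apply: eq_bigr => j _; rewrite scalerDl.
Qed.

Lemma inspanZ (C : numClosedFieldType) a j0 j1 j2 (k : C) (M : 'M[C]_2) :
  inspan a j0 j1 j2 M -> inspan a j0 j1 j2 (k *: M).
Proof.
move=> [w [h0 h1 h2 ->]].
exists (fun j => k * w j); split; rewrite ?h0 ?h1 ?h2 ?mulr0 //.
by rewrite scaler_sumr; apply: eq_bigr => j _; rewrite scalerA.
Qed.

Lemma span_false (C : numClosedFieldType) (a : 'I_6 -> 'M[C]_2) j0 j1 j2 :
  j0 != j1 -> j0 != j2 -> j1 != j2 ->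
  inspan a j0 j1 j2 (mk2 1 0 0 0) -> inspan a j0 j1 j2 (mk2 0 1 0 0) ->
  inspan a j0 j1 j2 (mk2 0 0 1 0) -> inspan a j0 j1 j2 (mk2 0 0 0 1) -> False.
Proof.
move=> h01 h02 h12 H00 H01 H10 H11.
pose V := (\sum_(j | [pred j : 'I_6 | (j != j0) && (j != j1) && (j != j2)] j) <<mxvec (a j)>>)%MS.
have sub : forall M, inspan a j0 j1 j2 M -> (mxvec M <= V)%MS.
  move=> M [w [h0 h1 h2 ->]].
  rewrite linear_sum /=; apply: summx_sub => j _.
  rewrite linearZ /=.
  case: (boolP ((j != j0) && (j != j1) && (j != j2))) => Hj.
    by apply: scalemx_sub; rewrite (sumsmx_sup j) // genmxE.
  move: Hj; rewrite !negb_and !negbK => /orP[/orP[]|] /eqP ->;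
    by rewrite ?h0 ?h1 ?h2 scale0r sub0mx.
have : (1%:M <= V)%MS.
  apply/row_subP => i; rewrite row1.
  case: (mxvec_indexP i) => i1 i2; rewrite -mxvec_delta; apply: sub.
  case: (ord2P i1) (ord2P i2) => -> [] ->;
  [ have -> : delta_mx 0 0 = mk2 1 0 0 0 :> 'M[C]_2
  | have -> : delta_mx 0 1 = mk2 0 1 0 0 :> 'M[C]_2
  | have -> : delta_mx 1 0 = mk2 0 0 1 0 :> 'M[C]_2
  | have -> : delta_mx 1 1 = mk2 0 0 0 1 :> 'M[C]_2 ]; rewrite // ;
  by apply/matrixP => p q; rewrite !mxE; case: (ord2P p) (ord2P q) => -> [] ->.
move/mxrankS; rewrite mxrank1 => H.
have := leq_trans H (rank_sum_le _ _).
by rewrite card3.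
Qed.

Definition pair (C : numClosedFieldType) (G X : 'M[C]_2) : C :=
  G 0 0 * X 0 0 + G 0 1 * X 0 1 + G 1 0 * X 1 0 + G 1 1 * X 1 1.

Lemma pairE (C : numClosedFieldType) (G : 'M[C]_2) x y z w :
  pair G (mk2 x y z w) = G 0 0 * x + G 0 1 * y + G 1 0 * z + G 1 1 * w.
Proof. by rewrite /pair !mk2E. Qed.

Lemma add2 (C : numClosedFieldType) (a b c d a' b' c' d' : C) :
  mk2 a b c d + mk2 a' b' c' d' = mk2 (a + a') (b + b') (c + c') (d + d').
Proof. by apply/matrixP => i j; rewrite !mxE; case: (ord2P i) (ord2P j) => -> [] ->. Qed.

Lemma scale2 (C : numClosedFieldType) (k a b c d : C) :
  k *: mk2 a b c d = mk2 (k * a) (k * b) (k * c) (k * d).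
Proof. by apply/matrixP => i j; rewrite !mxE; case: (ord2P i) (ord2P j) => -> [] ->. Qed.

Lemma mk2_neq0 (C : numClosedFieldType) (a b c d : C) : b != 0 -> mk2 a b c d != 0.
Proof.
move=> hb; apply/eqP => E; move: hb; have := congr1 (fun M : 'M[C]_2 => M 0 1) E.
by rewrite !mxE /= => ->; rewrite eqxx.
Qed.

Lemma mk2_neq0a (C : numClosedFieldType) (a b c d : C) : a != 0 -> mk2 a b c d != 0.
Proof.
move=> hb; apply/eqP => E; move: hb; have := congr1 (fun M : 'M[C]_2 => M 0 0) E.
by rewrite !mxE /= => ->; rewrite eqxx.
Qed.

Lemma exists_nz (C : numClosedFieldType) (f : 'I_6 -> C) (a : 'I_6 -> 'M[C]_2) (M : 'M[C]_2) :
  M != 0 -> M = \sum_j f j *: a j -> exists j, f j != 0.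
Proof.
move=> hM E.
case: (pickP (fun j => f j != 0)) => [j Hj|H]; first by exists j.
move: hM; rewrite E big1 ?eqxx // => j _.
by move/negbFE: (H j) => /eqP ->; rewrite scale0r.
Qed.

Lemma pencil (C : numClosedFieldType) (al be : 'I_6 -> C) (b a : 'I_6 -> 'M[C]_2) :
  al 0 = 0 -> be 0 = 0 ->
  (forall Y, Y = \sum_j (al j * pair (b j) Y) *: a j) ->
  (forall Y, mk2 0 1 0 0 *m Y = \sum_j (be j * pair (b j) Y) *: a j) -> False.
Proof.
move=> al0 be0 H1 H2.
have [j1 Hj1] := exists_nz (@mk2_neq0 C 0 1 0 0 (oner_neq0 C)) (H1 (mk2 0 1 0 0)).
move: Hj1; rewrite pairE mulf_eq0 negb_or => /andP[alj1 p0].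
have {}p0 : b j1 0 1 != 0 by move: p0; rewrite !mulr0 !mulr1 !addr0 add0r.
pose d2 := mk2 (b j1 0 1) (- b j1 0 0) 0 0.
have d2nz : d2 != 0 by apply: mk2_neq0a.
have [j2 Hj2] := exists_nz d2nz (H1 d2).
move: Hj2; rewrite /d2 pairE mulf_eq0 negb_or => /andP[alj2 del].
have j10 : j1 != 0 by apply: contraNneq alj1 => ->; rewrite al0.
have j20 : j2 != 0 by apply: contraNneq alj2 => ->; rewrite al0.
have j12 : j1 != j2.
  by apply: contraNneq del => <-; rewrite !mulr0 !addr0 mulrN mulrC subrr.
have den0 : b j1 0 0 * b j2 0 1 - b j1 0 1 * b j2 0 0 != 0.
  apply: contraNneq del => E; apply/eqP.
  rewrite !mulr0 !addr0; apply/eqP; rewrite -oppr_eq0; apply/eqP; rewrite -E; ring.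
pose den := b j1 0 0 * b j2 0 1 - b j1 0 1 * b j2 0 0.
pose Y1 := mk2 ((- b j1 1 0 * b j2 0 1 + b j1 0 1 * b j2 1 0) / den)
               ((- b j1 0 0 * b j2 1 0 + b j1 1 0 * b j2 0 0) / den) 1 0.
pose Y2 := mk2 ((- b j1 1 1 * b j2 0 1 + b j1 0 1 * b j2 1 1) / den)
               ((- b j1 0 0 * b j2 1 1 + b j1 1 1 * b j2 0 0) / den) 0 1.
have pY11 : pair (b j1) Y1 = 0.
  by rewrite /Y1 pairE /den; field.
have pY12 : pair (b j2) Y1 = 0.
  by rewrite /Y1 /Y2 pairE /den; field.
have pY21 : pair (b j1) Y2 = 0.
  by rewrite /Y1 /Y2 pairE /den; field.
have pY22 : pair (b j2) Y2 = 0.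
  by rewrite /Y1 /Y2 pairE /den; field.
have sY1 : inspan a 0 j1 j2 Y1.
  exists (fun j => al j * pair (b j) Y1); split; last exact: H1.
  - by rewrite al0 mul0r.
  - by rewrite pY11 mulr0.
  - by rewrite pY12 mulr0.
have sY2 : inspan a 0 j1 j2 Y2.
  exists (fun j => al j * pair (b j) Y2); split; last exact: H1.
  - by rewrite al0 mul0r.
  - by rewrite pY21 mulr0.
  - by rewrite pY22 mulr0.
have sE00 : inspan a 0 j1 j2 (mk2 1 0 0 0).
  exists (fun j => be j * pair (b j) Y1); split;
    [by rewrite be0 mul0r | by rewrite pY11 mulr0 | by rewrite pY12 mulr0 |
     by rewrite -H2 mul2; congr mk2; ring].
have sE01 : inspan a 0 j1 j2 (mk2 0 1 0 0).
  exists (fun j => be j * pair (b j) Y2); split;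
    [by rewrite be0 mul0r | by rewrite pY21 mulr0 | by rewrite pY22 mulr0 |
     by rewrite -H2 mul2; congr mk2; ring].
apply: (@span_false C a 0 j1 j2) => //; rewrite 1?eq_sym //.
- have -> : mk2 0 0 1 0 = Y1 + (- Y1 0 0) *: mk2 1 0 0 0 + (- Y1 0 1) *: mk2 0 1 0 0.
    by rewrite /Y1 !mk2E !scale2 !add2; congr mk2; ring.
  by apply: inspanD; [apply: inspanD|]; rewrite //; apply: inspanZ.
- have -> : mk2 0 0 0 1 = Y2 + (- Y2 0 0) *: mk2 1 0 0 0 + (- Y2 0 1) *: mk2 0 1 0 0.
    by rewrite /Y2 !mk2E !scale2 !add2; congr mk2; ring.
  by apply: inspanD; [apply: inspanD|]; rewrite //; apply: inspanZ.
Qed.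
Lemma det2 (C : numClosedFieldType) (A : 'M[C]_2) : \det A = A 0 0 * A 1 1 - A 0 1 * A 1 0.
Proof.
have L1 : forall j : 'I_1, lift (0 : 'I_2) j = 1 by move=> j; apply: val_inj; rewrite /= ord1.
have L2 : forall j : 'I_1, lift (1 : 'I_2) j = 0 by move=> j; apply: val_inj; rewrite /= ord1.
have L0 : (ord0 : 'I_2) = 0 by apply: val_inj.
rewrite (expand_det_row _ 0) !big_ord_recl big_ord0 /cofactor !det_mx11 !mxE /= !L0 L1.
rewrite L2 /bump /= expr0 expr1; ring.
Qed.

Lemma unit2 (C : numClosedFieldType) (a b c d : C) :
  (mk2 a b c d \in unitmx) = (a * d - b * c != 0).
Proof. by rewrite unitmxE det2 !mk2E unitfE. Qed.

Lemma nz_eq (C : numClosedFieldType) (x y : C) : y != 0 -> x = y -> x != 0.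
Proof. by move=> h ->. Qed.

Lemma findQR (C : numClosedFieldType) (G : 'M[C]_2) :
  exists Q R : 'M[C]_2, [/\ Q \in unitmx, R \in unitmx, pair G (Q *m R) = 0
     & pair G (Q *m mk2 0 1 0 0 *m R) = 0].
Proof.
rewrite /pair; move: (G 0 0) (G 0 1) (G 1 0) (G 1 1) => a b c d.
case: (eqVneq (a * d - b * c) 0) => hdet; last first.
  exists (mk2 d c (-b) (-a)), (mk2 1 0 0 1); split; rewrite ?unit2 ?mul2 ?mk2E.
  - by apply: (nz_eq (y := - (a * d - b * c))); [rewrite oppr_eq0|ring].
  - by apply: (nz_eq (y := 1)); [rewrite oner_eq0|ring].
  - ring.
  - ring.
move/eqP: hdet; rewrite subr_eq0 => /eqP hdet.
case: (eqVneq a 0) => ha.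
  case: (eqVneq b 0) => hb.
    case: (eqVneq c 0) => hc.
      case: (eqVneq d 0) => hd.
        exists (mk2 1 0 0 1), (mk2 1 0 0 1); split; rewrite ?unit2 ?mul2 ?mk2E ?ha ?hb ?hc ?hd.
        - by apply: (nz_eq (y := 1)); [rewrite oner_eq0|ring].
        - by apply: (nz_eq (y := 1)); [rewrite oner_eq0|ring].
        - ring.
        - ring.
      have ea : a = b * c / d by rewrite -hdet mulfK.
      exists (mk2 (- d ^+ 2) 0 (d * b) 1), (mk2 0 1 (- d ^+ 2) (d * c)); split; rewrite ?unit2 ?mul2 ?mk2E.
      - by apply: (nz_eq (y := - d ^+ 2)); [rewrite oppr_eq0 expf_neq0|ring].
      - by apply: (nz_eq (y := d ^+ 2)); [rewrite expf_neq0|ring].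
      - by rewrite ea; field.
      - by rewrite ea; field.
    have eb : b = a * d / c by rewrite hdet mulfK.
    exists (mk2 (- c ^+ 2) 0 (c * a) 1), (mk2 1 0 (c * d) (- c ^+ 2)); split; rewrite ?unit2 ?mul2 ?mk2E.
    - by apply: (nz_eq (y := - c ^+ 2)); [rewrite oppr_eq0 expf_neq0|ring].
    - by apply: (nz_eq (y := - c ^+ 2)); [rewrite oppr_eq0 expf_neq0|ring].
    - by rewrite eb; field.
    - by rewrite eb; field.
  have ec : c = a * d / b by rewrite hdet [b * c]mulrC mulfK.
  exists (mk2 (b * d) 1 (- b ^+ 2) 0), (mk2 0 1 (- b ^+ 2) (a * b)); split; rewrite ?unit2 ?mul2 ?mk2E.
  - by apply: (nz_eq (y := b ^+ 2)); [rewrite expf_neq0|ring].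
  - by apply: (nz_eq (y := b ^+ 2)); [rewrite expf_neq0|ring].
  - by rewrite ec; field.
  - by rewrite ec; field.
have ed : d = b * c / a by rewrite -hdet [a * d]mulrC mulfK.
exists (mk2 (a * c) 1 (- a ^+ 2) 0), (mk2 1 0 (a * b) (- a ^+ 2)); split; rewrite ?unit2 ?mul2 ?mk2E.
- by apply: (nz_eq (y := a ^+ 2)); [rewrite expf_neq0|ring].
- by apply: (nz_eq (y := - a ^+ 2)); [rewrite oppr_eq0 expf_neq0|ring].
- by rewrite ed; field.
- by rewrite ed; field.
Qed.

Lemma tr2 (C : numClosedFieldType) (a b c d : C) : (mk2 a b c d)^T = mk2 a c b d.
Proof. by apply/matrixP => i j; rewrite !mxE; case: (ord2P i) (ord2P j) => -> [] ->. Qed.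

Lemma pairM (C : numClosedFieldType) (G P Y : 'M[C]_2) : pair G (P *m Y) = pair (P^T *m G) Y.
Proof.
rewrite [G]mx2_eta [P]mx2_eta [Y]mx2_eta tr2 !mul2 /pair !mk2E; ring.
Qed.

Lemma core (C : numClosedFieldType) (a b c : 'I_6 -> 'M[C]_2) :
  (forall X Y, X *m Y = \sum_j (pair (c j) X * pair (b j) Y) *: a j) -> False.
Proof.
move=> H.
have [Q [R [uQ uR h0 h1]]] := findQR (c 0).
pose P := invmx R.
have RP : R *m P = 1 by rewrite mulmxV.
apply: (@pencil C (fun j => pair (c j) (Q *m R)) (fun j => pair (c j) (Q *m mk2 0 1 0 0 *m R))
          (fun j => P^T *m b j) (fun j => invmx Q *m a j)); [exact: h0|exact: h1| move=> Y..].
- have := H (Q *m R) (P *m Y); rewrite -mulmxA (mulmxA R) RP mul1mx => E.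
  rewrite -{1}(mulKmx uQ Y) E mulmx_sumr; apply: eq_bigr => j _.
  by rewrite -scalemxAr [pair (b j) _]pairM.
- have := H (Q *m mk2 0 1 0 0 *m R) (P *m Y); rewrite -mulmxA (mulmxA R) RP mul1mx => E.
  rewrite -(mulKmx uQ (mk2 0 1 0 0 *m Y)) [Q *m (_ *m _)]mulmxA E mulmx_sumr; apply: eq_bigr => j _.
  by rewrite -scalemxAr [pair (b j) _]pairM.
Qed.

Definition idx3 (i1 i2 i3 : 'I_2) : 'I_(2 * 2 * 2) := mxtens_index (mxtens_index (i1, i2), i3).

Definition Phi (C : numClosedFieldType) (M : 'M[C]_(2 * 2 * 2)) (Z Xi : 'M[C]_2) : 'M[C]_2 :=
  \matrix_(i, k) \sum_(i2 < 2) \sum_(k2 < 2) \sum_(i3 < 2) \sum_(k3 < 2)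
     M (idx3 i i2 i3) (idx3 k k2 k3) * (Xi i2 k2 * Z i3 k3).

Lemma PhiD (C : numClosedFieldType) (M N : 'M[C]_(2 * 2 * 2)) Z Xi :
  Phi (M + N) Z Xi = Phi M Z Xi + Phi N Z Xi.
Proof.
apply/matrixP => i k; rewrite !mxE -big_split; apply: eq_bigr => i2 _.
rewrite -big_split; apply: eq_bigr => k2 _; rewrite -big_split; apply: eq_bigr => i3 _.
rewrite -big_split; apply: eq_bigr => k3 _; by rewrite mxE mulrDl.
Qed.

Lemma Phi0 (C : numClosedFieldType) (Z Xi : 'M[C]_2) : Phi 0 Z Xi = 0.
Proof.
apply/matrixP => i k; rewrite !mxE big1 // => i2 _; rewrite big1 // => k2 _.
rewrite big1 // => i3 _; rewrite big1 // => k3 _; by rewrite mxE mul0r.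
Qed.

Lemma Phi_sum (C : numClosedFieldType) n (M : 'I_n -> 'M[C]_(2 * 2 * 2)) Z Xi :
  Phi (\sum_(j < n) M j) Z Xi = \sum_(j < n) Phi (M j) Z Xi.
Proof. by apply: (big_morph (fun M => Phi M Z Xi)); [move=> ? ?; exact: PhiD | exact: Phi0]. Qed.

Lemma Phi_tens (C : numClosedFieldType) (A B Cm Z Xi : 'M[C]_2) :
  Phi (tens3 A B Cm) Z Xi = (pair Cm Z * pair B Xi) *: A.
Proof.
apply/matrixP => i k; rewrite !mxE.
under eq_bigr => i2 _ do under eq_bigr => k2 _ do under eq_bigr => i3 _ do
  under eq_bigr => k3 _ do rewrite /tens3 /idx3 tensmxE tensmxE.
rewrite !big_ord_recl !big_ord0 /pair !lift01 !ord0_2; ring.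
Qed.

Definition sig (C : numClosedFieldType) (X : 'M[C]_2) := mk2 (X 1 1) (X 0 0) (X 1 0) (X 0 1).
Definition tau (C : numClosedFieldType) (Y : 'M[C]_2) := mk2 (Y 0 0) (Y 0 1) (Y 1 1) (Y 1 0).
Definition rho (C : numClosedFieldType) (F : 'M[C]_2) := mk2 (F 0 0) (F 1 1) (F 1 0) (F 0 1).
Definition sigT (C : numClosedFieldType) (G : 'M[C]_2) := mk2 (G 0 1) (G 1 1) (G 1 0) (G 0 0).
Definition tauT (C : numClosedFieldType) (G : 'M[C]_2) := mk2 (G 0 0) (G 0 1) (G 1 1) (G 1 0).

Lemma delta2 (C : numClosedFieldType) :
  (delta_mx 0 0 = mk2 1 0 0 0 :> 'M[C]_2) * (delta_mx 0 1 = mk2 0 1 0 0 :> 'M[C]_2) *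
  (delta_mx 1 0 = mk2 0 0 1 0 :> 'M[C]_2) * (delta_mx 1 1 = mk2 0 0 0 1 :> 'M[C]_2).
Proof.
by do !split; apply/matrixP => p q; rewrite !mxE; case: (ord2P p) (ord2P q) => -> [] ->.
Qed.

Lemma Phi_U7 (C : numClosedFieldType) (X Y : 'M[C]_2) :
  X *m Y = rho (Phi (U7 C) (sig X) (tau Y)).
Proof.
rewrite /U7 !PhiD !Phi_tens /S0 /S1 /S2 /S3 !delta2 /sig /tau !pairE !scale2 !add2 /rho !mk2E.
rewrite [X]mx2_eta [Y]mx2_eta mul2 !mk2E; congr mk2; ring.
Qed.

Lemma rho_sum (C : numClosedFieldType) n (w : 'I_n -> C) (A : 'I_n -> 'M[C]_2) :
  rho (\sum_j w j *: A j) = \sum_j w j *: rho (A j).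
Proof.
apply/matrixP => p q; rewrite summxE {1}/rho mxE.
case: (ord2P p) (ord2P q) => -> [] -> /=; rewrite summxE; apply: eq_bigr => j _;
  by rewrite !mxE /rho ?mxE.
Qed.

Lemma pair_sig (C : numClosedFieldType) (G X : 'M[C]_2) : pair G (sig X) = pair (sigT G) X.
Proof. by rewrite /sig /sigT !pairE /pair !mk2E; ring. Qed.
Lemma pair_tau (C : numClosedFieldType) (G X : 'M[C]_2) : pair G (tau X) = pair (tauT G) X.
Proof. by rewrite /tau /tauT !pairE /pair !mk2E; ring. Qed.

Lemma lower6 (C : numClosedFieldType) (A B Cm : 'I_6 -> 'M[C]_2) :
  U7 C = \sum_(j < 6) tens3 (A j) (B j) (Cm j) -> False.
Proof.
move=> hU.
apply: (@core C (fun j => rho (A j)) (fun j => tauT (B j)) (fun j => sigT (Cm j))) => X Y.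
rewrite Phi_U7 hU Phi_sum.
under eq_bigr => j _ do rewrite Phi_tens pair_sig pair_tau.
by rewrite rho_sum.
Qed.

Lemma pad6 (C : numClosedFieldType) r (A B Cm : 'I_r -> 'M[C]_2) : (r <= 6)%N ->
  exists A' B' Cm' : 'I_6 -> 'M[C]_2,
    \sum_(j < r) tens3 (A j) (B j) (Cm j) = \sum_(j < 6) tens3 (A' j) (B' j) (Cm' j).
Proof.
move=> hr.
pose F (n : nat) := if (insub n : option 'I_r) is Some k then tens3 (A k) (B k) (Cm k) else 0.
exists (fun j => if (insub (val j) : option 'I_r) is Some k then A k else 0).
exists (fun j => if (insub (val j) : option 'I_r) is Some k then B k else 0).
exists (fun j => if (insub (val j) : option 'I_r) is Some k then Cm k else 0).
have -> : \sum_(j < r) tens3 (A j) (B j) (Cm j) = \sum_(j < r) F j.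
  by apply: eq_bigr => j _; rewrite /F valK.
rewrite (big_ord_widen 6 F hr) big_mkcond; apply: eq_bigr => j _.
rewrite /F; case: insubP => [k hk _|hk]; first by rewrite hk.
by rewrite ifF ?(negbTE hk) // /tens3 !tens0mx.
Qed.

Lemma tens3E (C : numClosedFieldType) (A B Cm : 'M[C]_2) i1 i2 i3 k1 k2 k3 :
  tens3 A B Cm (idx3 i1 i2 i3) (idx3 k1 k2 k3) = A i1 k1 * B i2 k2 * Cm i3 k3.
Proof. by rewrite /tens3 /idx3 !tensmxE. Qed.

Definition stA (C : numClosedFieldType) : seq 'M[C]_2 :=
  [:: mk2 1 1 0 0; mk2 0 (-1) 1 0; mk2 0 1 0 1; mk2 1 0 1 0; mk2 (-1) 0 0 1; mk2 0 1 0 0; mk2 1 0 0 0].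
Definition stB (C : numClosedFieldType) : seq 'M[C]_2 :=
  [:: mk2 1 0 1 0; mk2 1 0 0 0; mk2 0 1 (-1) 0; mk2 (-1) 0 0 1; mk2 0 0 1 0; mk2 1 1 0 0; mk2 0 0 1 1].
Definition stC (C : numClosedFieldType) : seq 'M[C]_2 :=
  [:: mk2 1 1 0 0; mk2 1 0 1 0; mk2 0 1 0 0; mk2 1 0 0 0; mk2 0 1 0 1; mk2 0 (-1) 1 0; mk2 (-1) 0 0 1].

Lemma addE (C : numClosedFieldType) m n (A B : 'M[C]_(m, n)) i j : (A + B) i j = A i j + B i j.
Proof. by rewrite mxE. Qed.

Lemma upper7 (C : numClosedFieldType) : sr_le (U7 C) 7.
Proof.
exists (fun j => nth 0 (stA C) j), (fun j => nth 0 (stB C) j), (fun j => nth 0 (stC C) j).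
apply/matrixP => i k.
case: (mxtens_indexP i) => i12 i3; case: (mxtens_indexP i12) => i1 i2.
case: (mxtens_indexP k) => k12 k3; case: (mxtens_indexP k12) => k1 k2.
rewrite summxE !big_ord_recl big_ord0 /U7 !addE.
rewrite -!/(idx3 _ _ _) !tens3E /= /S0 /S1 /S2 /S3 !delta2.
case: (ord2P i1) => ->; case: (ord2P i2) => ->; case: (ord2P i3) => ->;
case: (ord2P k1) => ->; case: (ord2P k2) => ->; case: (ord2P k3) => ->; rewrite !mk2E; ring.
Qed.
Lemma U7idx (C : numClosedFieldType) i1 i2 i3 k1 k2 k3 :
  U7 C (idx3 i1 i2 i3) (idx3 k1 k2 k3) =
  mk2 0 1 0 0 i1 k1 * mk2 0 0 1 0 i2 k2 * mk2 1 0 0 0 i3 k3 +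
  mk2 0 0 1 0 i1 k1 * mk2 0 0 0 1 i2 k2 * mk2 1 0 0 0 i3 k3 +
  mk2 1 0 0 0 i1 k1 * mk2 1 0 0 0 i2 k2 * mk2 0 1 0 0 i3 k3 +
  mk2 0 0 0 1 i1 k1 * mk2 0 1 0 0 i2 k2 * mk2 0 1 0 0 i3 k3 +
  mk2 0 1 0 0 i1 k1 * mk2 0 1 0 0 i2 k2 * mk2 0 0 1 0 i3 k3 +
  mk2 0 0 1 0 i1 k1 * mk2 1 0 0 0 i2 k2 * mk2 0 0 1 0 i3 k3 +
  mk2 1 0 0 0 i1 k1 * mk2 0 0 0 1 i2 k2 * mk2 0 0 0 1 i3 k3 +
  mk2 0 0 0 1 i1 k1 * mk2 0 0 1 0 i2 k2 * mk2 0 0 0 1 i3 k3.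
Proof. by rewrite /U7 !addE !tens3E /S0 /S1 /S2 /S3 !delta2. Qed.

Definition f7 (p : 'I_(2 * 2 * 2)) : 'I_(2 * 2 * 2) := inord (nth 0%N [:: 1; 6; 4; 3; 7; 0; 2; 5]%N p).

Lemma U7f (C : numClosedFieldType) p q : U7 C p q = (q == f7 p)%:R.
Proof.
case: (mxtens_indexP p) => i12 i3; case: (mxtens_indexP i12) => i1 i2.
case: (mxtens_indexP q) => k12 k3; case: (mxtens_indexP k12) => k1 k2.
rewrite -!/(idx3 _ _ _) U7idx.
case: (ord2P i1) => ->; case: (ord2P i2) => ->; case: (ord2P i3) => ->;
case: (ord2P k1) => ->; case: (ord2P k2) => ->; case: (ord2P k3) => ->;
rewrite !mk2E.
all: rewrite ?(mulr0, mul0r, mulr1, mul1r, addr0, add0r).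
all: rewrite -[_ == _]/(nat_of_ord _ == nat_of_ord _) /idx3 /f7 /= ?inordK //.
Qed.

Lemma f7_inj : injective f7.
Proof.
have lt8 : forall n, (nth 0 [:: 1; 6; 4; 3; 7; 0; 2; 5] n < 8)%N.
  by move=> n; do 8?[case: n => [|n] //]; rewrite /= nth_nil.
move=> p r /(congr1 (@nat_of_ord _)); rewrite /f7 !inordK ?lt8 //.
case: p => [[|[|[|[|[|[|[|[|//]]]]]]]] Hp]; case: r => [[|[|[|[|[|[|[|[|//]]]]]]]] Hr] /= H;
  apply: val_inj => //=; discriminate H.
Qed.

Lemma adjE (C : numClosedFieldType) n (M : 'M[C]_n) p q : adjmx M p q = (M q p)^*.
Proof. by rewrite !mxE. Qed.

Lemma unit7 (C : numClosedFieldType) : unitary_mx (U7 C).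
Proof.
suff h : U7 C *m adjmx (U7 C) = 1%:M by split => //; exact: mulmx1C.
apply/matrixP => p r; rewrite [LHS]mxE [RHS]mxE (bigD1 (f7 p)) //= big1 ?addr0.
  by rewrite adjE !U7f eqxx mul1r rmorph_nat (inj_eq f7_inj) eq_sym.
by move=> q hq; rewrite adjE !U7f (negbTE hq) mul0r.
Qed.

Theorem mainTheorem6 (C : numClosedFieldType) :
  unitary_mx (U7 C) /\ is_schmidt_rank (U7 C) 7.
Proof.
split; first exact: unit7.
split; first exact: upper7.
move=> r' [A [B [Cm hU]]].
rewrite leqNgt; apply/negP => hlt.
have [A' [B' [Cm' E]]] := pad6 A B Cm hlt.
by apply: (@lower6 C A' B' Cm'); rewrite hU E.
Qed.
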